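(* If $\Gamma\in\mathcal S$ has vertices $v_1,\dots,v_n$, then $\left|\sum_{i=1}^n d(v_i)\right|\le 3n+1$.
   Context: A plumbing tree is a finite tree $\Gamma$ each of whose vertices $v$ carries an integer decoration $d(v)$. $\Gamma$ is minimal if no vertex has decoration $-1$. For $n\ge 1$ let $(\mathbb Z^n,Q_n)$ be the lattice with basis $E_1,\dots,E_n$ and $Q_n(E_i,E_j)=-\delta_{ij}$, and let $K=\sum_{i=1}^n E_i$. A plumbing tree $\Gamma$ on $n$ vertices is a symplectic plumbing tree if there is a map $\varphi$ (an embedding) from its vertex set to $\mathbb Z^n$ such that: for distinct vertices $v_1,v_2$, $Q_n(\varphi(v_1),\varphi(v_2))$ is $1$ if they are adjacent and $0$ otherwise; $Q_n(\varphi(v),\varphi(v))=d(v)$ for every $v$; and $Q_n(\varphi(v),K)+Q_n(\varphi(v),\varphi(v))=-2$ for every $v$. $\mathcal S$ is the set of minimal, connected symplectic plumbing trees. *)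

(* Defs.v *)
From HB Require Import structures.
From mathcomp Require Import all_boot all_order all_algebra.
Set Implicit Arguments. Unset Strict Implicit. Unset Printing Implicit Defensive.
Import Order.TTheory GRing.Theory Num.Theory.
Local Open Scope ring_scope.

Definition simple_graph (n : nat) (e : rel 'I_n) : Prop :=
  symmetric e /\ irreflexive e.

Definition graph_connected (n : nat) (e : rel 'I_n) : Prop :=
  forall x y : 'I_n, connect e x y.

Definition graph_acyclic (n : nat) (e : rel 'I_n) : Prop :=
  forall s : seq 'I_n, uniq s -> (3 <= size s)%N -> ~~ cycle e s.

Definition is_tree (n : nat) (e : rel 'I_n) : Prop :=
  simple_graph e /\ graph_connected e /\ graph_acyclic e.

Definition Qn (n : nat) (x y : 'I_n -> int) : int := - \sum_(i < n) x i * y i.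

Definition Kn {n : nat} : 'I_n -> int := fun _ => 1.

Definition symplectic_embedding (n : nat) (e : rel 'I_n) (d : 'I_n -> int)
    (phi : 'I_n -> 'I_n -> int) : Prop :=
  (forall v1 v2 : 'I_n, v1 != v2 ->
      Qn (phi v1) (phi v2) = (if e v1 v2 then 1 else 0)) /\
  (forall v : 'I_n, Qn (phi v) (phi v) = d v) /\
  (forall v : 'I_n, Qn (phi v) (@Kn n) + Qn (phi v) (phi v) = -2).

Definition symplectic_plumbing_tree (n : nat) (e : rel 'I_n) (d : 'I_n -> int) : Prop :=
  is_tree e /\ exists phi, symplectic_embedding e d phi.

Definition minimal_tree (n : nat) (d : 'I_n -> int) : Prop :=
  forall v : 'I_n, d v != -1.

Definition in_S (n : nat) (e : rel 'I_n) (d : 'I_n -> int) : Prop :=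
  minimal_tree d /\ graph_connected e /\ symplectic_plumbing_tree e d.

(* Main.v *)
Require Import Defs.
From mathcomp Require Import all_boot all_order all_algebra.
From mathcomp Require Import zify ring lra.
Import Order.TTheory GRing.Theory Num.Theory.
Local Open Scope ring_scope.
Lemma CS n (F : 'I_n -> int) :
  (\sum_i F i) * (\sum_i F i) <= n%:R * \sum_i F i * F i.
Proof.
have H : 0 <= \sum_(i < n) \sum_(j < n) (F i - F j) * (F i - F j).
  by apply: sumr_ge0 => i _; apply: sumr_ge0 => j _; rewrite -expr2 sqr_ge0.
have E : \sum_(i < n) \sum_(j < n) (F i - F j) * (F i - F j) =
   \sum_(i < n) \sum_(j < n) (F i * F i) + \sum_(i < n) \sum_(j < n) (F j * F j)
   - 2%:R * \sum_(i < n) \sum_(j < n) (F i * F j).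
  rewrite mulr_sumr -big_split -sumrB /=; apply: eq_bigr => i _.
  rewrite mulr_sumr -big_split -sumrB /=; apply: eq_bigr => j _; ring.
move: H; rewrite E.
rewrite [X in X + _ - _](eq_bigr (fun i => n%:R * (F i * F i))); last first.
  by move=> i _; rewrite sumr_const card_ord mulr_natl.
rewrite exchange_big /= [X in _ + X - _](eq_bigr (fun i => n%:R * (F i * F i))); last first.
  by move=> i _; rewrite sumr_const card_ord mulr_natl.

have -> : \sum_(i < n) \sum_(j < n) F i * F j = (\sum_i F i) * (\sum_i F i).
  rewrite mulr_suml; apply: eq_bigr => j _; rewrite mulr_sumr; apply: eq_bigr => i _; ring.

rewrite -mulr_sumr. lra.
Qed.

Section G.
Variables (n : nat) (e : rel 'I_n) (r : 'I_n).
Hypothesis esym : symmetric e.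
Hypothesis econ : forall v, connect e r v.

Definition reachin (v : 'I_n) (m : nat) : bool :=
  [exists p : m.-tuple 'I_n, path e r p && (last r p == v)].

Lemma reach_ex v : exists m, reachin v m.
Proof.
have /connectP [p pp lp] := econ v.
exists (size p); apply/existsP; exists (in_tuple p); by rewrite /= pp -lp eqxx.
Qed.

Definition rank v := ex_minn (reach_ex v).

Lemma parent_ex v : v != r -> exists u, e u v && (rank u < rank v)%N.
Proof.
move=> vr.
rewrite /rank; case: ex_minnP => m /existsP [p /andP [pp /eqP lp]] minm.
case: (lastP (tval p)) pp lp (size_tuple p) => [|q y].
  by move=> _ lp; rewrite -lp eqxx in vr.
rewrite rcons_path last_rcons size_rcons => /andP [pq ey] yv sz.
exists (last r q); rewrite -yv ey /=.
case: ex_minnP => k _ mk.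
have : reachin (last r q) (size q).
  by apply/existsP; exists (in_tuple q); rewrite /= pq eqxx.
move/mk; lia.
Qed.

Definition par v := odflt r [pick u | e u v && (rank u < rank v)%N].

Lemma parP v : v != r -> e (par v) v && (rank (par v) < rank v)%N.
Proof.
move=> vr; rewrite /par; case: pickP => [u -> //|H].
by have [u] := @parent_ex v vr; rewrite (H u).
Qed.

Lemma pointwise v w :
  ((w == par v) && (v != r))%:R + ((v == par w) && (w != r))%:R <= (e v w)%:R :> int.
Proof.
have A : (w == par v) && (v != r) -> e v w && (rank w < rank v)%N.
  case/andP=> /eqP -> vr; have /andP [h1 h2] := @parP v vr; by rewrite esym h1.
have B : (v == par w) && (w != r) -> e v w && (rank v < rank w)%N.
  case/andP=> /eqP -> wr; have /andP [h1 h2] := @parP w wr; by rewrite h1.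
move: A B; case: ((w == par v) && (v != r)); case: ((v == par w) && (w != r)) => /=.
- move=> /(_ isT) /andP [_ h1] /(_ isT) /andP [_ h2]; lia.
- by move=> /(_ isT) /andP [-> _].
- by move=> _ /(_ isT) /andP [-> _].
- by move=> _ _; case: (e v w).
Qed.

Lemma count_sing (a : 'I_n) : \sum_(w < n) (w == a)%:R = 1 :> int.
Proof. by rewrite (bigD1 a) //= eqxx big1 ?addr0 // => i /negPn/negPn/negbTE ->. Qed.

Lemma edge_count : (2 * (n - 1))%:R <= \sum_(v < n) \sum_(w < n) (e v w)%:R :> int.
Proof.
apply: le_trans (ler_sum _ (fun v _ => ler_sum _ (fun w _ => pointwise v w))).
under eq_bigr do rewrite big_split /=.
rewrite big_split /= [X in _ <= _ + X]exchange_big /=.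
have E1 : forall v, \sum_(w < n) ((w == par v) && (v != r))%:R = (v != r)%:R :> int.
  move=> v; case: (v != r); last by rewrite big1 // => i _; rewrite andbF.
  by under eq_bigr do rewrite andbT; rewrite count_sing.
under eq_bigr do rewrite E1.

have -> : \sum_(i < n) (i != r)%:R = (n - 1)%:R :> int.
  rewrite (bigD1 r) //= eqxx /= add0r.
  rewrite (eq_bigr (fun _ => 1)); last by move=> i ->.
  rewrite sumr_const. 
  have -> : #|[pred i : 'I_n | i != r]| = (n - 1)%N.
    have := cardC1 r; rewrite card_ord => H; rewrite subn1 -H; apply: eq_card => i.
    by [].
  done.
lia.
Qed.
End G.

Theorem corollary3p3 (n : nat) (e : rel 'I_n) (d : 'I_n -> int) :
  (0 < n)%N -> in_S e d ->
  `| \sum_(i < n) d i | <= (3 * n + 1)%:R :> int.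
Proof.
move=> n0 [_ [conn [[[sym irr] _] [x [H1 [H2 H3]]]]]].
set r : 'I_n := Ordinal n0.
have EC := @edge_count n e r sym (conn r).
have F1 : forall v, \sum_i x v i * x v i = - d v.
  by move=> v; rewrite -H2 /Qn opprK.
have F2 : forall v, \sum_i x v i = 2 + d v.
  move=> v; have := H3 v; rewrite H2 /Qn /Kn.
  under eq_bigr do rewrite mulr1.
  move=> h; lra.
have F3 : forall v w, \sum_i x v i * x w i = (v == w)%:R * (- d v) - (e v w)%:R.
  move=> v w; case: (eqVneq v w) => [<-|vw].
    by rewrite irr /= F1 mul1r subr0.
  rewrite mul0r sub0r; have := H1 v w vw; rewrite /Qn => h.
  rewrite -[LHS]opprK h; by case: (e v w).
set S := fun i => \sum_(v < n) x v i.
have SS : \sum_i S i = 2 * n%:R + \sum_v d v.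
  rewrite /S exchange_big /=; under eq_bigr do rewrite F2.
  by rewrite big_split /= sumr_const card_ord mulr_natr.
have SQ : \sum_i S i * S i = - \sum_v d v - \sum_v \sum_w (e v w)%:R.
  rewrite /S.
  have -> : \sum_i (\sum_(v < n) x v i) * (\sum_(v < n) x v i) =
            \sum_i \sum_(v < n) \sum_(w < n) x v i * x w i.
    apply: eq_bigr => i _; rewrite mulr_suml; apply: eq_bigr => v _; by rewrite mulr_sumr.
  rewrite exchange_big /=.
  under eq_bigr do rewrite exchange_big /=.
  under eq_bigr do under eq_bigr do rewrite F3.
  rewrite -sumrN -sumrB; apply: eq_bigr => v _.
  rewrite sumrB (bigD1 v) //= eqxx mul1r big1 ?addr0 //.
  by move=> w /negbTE; rewrite eq_sym => ->; rewrite mul0r.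
have CSi := @CS n S.
have Dneg : \sum_v d v <= 0.
  rewrite -oppr_ge0 -sumrN; apply: sumr_ge0 => v _; rewrite -F1.
  by apply: sumr_ge0 => i _; rewrite -expr2 sqr_ge0.
rewrite ler0_norm //.
move: CSi; rewrite SS SQ.
set s := \sum_v d v; set E := \sum_v \sum_w _.
move: EC; rewrite -/E.
have -> : ((2 * (n - 1))%:R : int) = 2 * n%:R - 2.
  rewrite natrM natrB //; lia.
rewrite natrD natrM.
move=> h1 h2.
nia.
Qed.
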